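(* Let $b\in\mathbb{N}$, $b\ge1$, $n=\frac{2^b}{2}+b$, and $a:=2^b=2(n-b)$. Then there exist $a$ sequences $S_0,\dots,S_{a-1}$ of binary vectors, where $S_i=(S_{i,1},S_{i,2},\dots,S_{i,2^n/a})$ with each $S_{i,k}\in\{0,1\}^n$, such that: (1) the sets $\{S_{i,k}:1\le k\le 2^n/a\}$, $i=0,\dots,a-1$, form a partition of $\{0,1\}^n$ (in particular all $S_{i,k}$ are distinct); (2) for all $i\in\{0,\dots,a-1\}$ and all $k\in\{1,\dots,\frac{2^n}{a}-1\}$, $H(S_{i,k},S_{i,k+1})=1$; (3) for all $i,j\in\{0,\dots,a-1\}$ with $i\neq j$ and all $k\in\{1,\dots,\frac{2^n}{a}-1\}$, the coordinate in which $S_{i,k}$ and $S_{i,k+1}$ differ is different from the coordinate in which $S_{j,k}$ and $S_{j,k+1}$ differ, unless $H(S_{i,k},S_{j,k})=1$.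
   Context: $H(u,v)$ denotes the Hamming distance between binary vectors $u,v\in\{0,1\}^n$, i.e. the number of coordinates in which they differ. *)

(* Defs.v *)
From mathcomp Require Import all_boot.
Set Implicit Arguments. Unset Strict Implicit. Unset Printing Implicit Defensive.

Definition bvec (n : nat) := {ffun 'I_n -> bool}.

Definition hamming (n : nat) (u v : bvec n) : nat := #|[set t | u t != v t]|.

(* Main.v *)
Require Import Defs.
From mathcomp Require Import all_boot.
From mathcomp Require Import zify.

Definition gbit (k t : nat) : bool := odd (k %/ 2^t) (+) odd (k %/ 2^t.+1).

Lemma bitS k d : 0 < d -> odd (k.+1 %/ d) = odd (k %/ d) (+) (d %| k.+1).
Proof.
move=> d0.
have hk := divn_eq k d. have hr := ltn_pmod k d0.
move: hk hr; set q := k %/ d; set r := k %% d => hk hr.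
case: (ltngtP r.+1 d) => hrd.
- have -> : k.+1 = q * d + r.+1 by rewrite {1}hk addnS.
  rewrite divnMDl // divn_small // addn0 dvdn_addr ?dvdn_mull //.
  by rewrite gtnNdvd // addbF.
- by exfalso; lia.
- have -> : k.+1 = q.+1 * d by rewrite {1}hk mulSn -hrd; lia.
  by rewrite mulnK // dvdn_mull // addbT.
Qed.

Lemma gflip k s : (gbit k.+1 s != gbit k s) = (s == logn 2 k.+1).
Proof.
rewrite /gbit !bitS ?expn_gt0 // !pfactor_dvdn //.
have E : (s <= logn 2 k.+1) (+) (s.+1 <= logn 2 k.+1) = (s == logn 2 k.+1).
  by case: ltngtP.
rewrite -E.
by move: (odd (k %/ 2^s)) (odd (k %/ 2^s.+1)) (s <= logn 2 k.+1) (s.+1 <= logn 2 k.+1) => [] [] [] [].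
Qed.

Lemma bits_inj N x y : x < 2^N -> y < 2^N ->
  (forall t, t < N -> odd (x %/ 2^t) = odd (y %/ 2^t)) -> x = y.
Proof.
elim: N x y => [|N IH] x y hx hy H.
- by move: hx hy; rewrite expn0 !ltnS !leqn0 => /eqP -> /eqP ->.
- rewrite (divn_eq x 2) (divn_eq y 2) !modn2.
  have H0 := H 0 isT. rewrite !expn0 !divn1 in H0. rewrite H0.
  congr (_ * _ + _). apply: IH.
  + by rewrite ltn_divLR // -expnSr.
  + by rewrite ltn_divLR // -expnSr.
  + move=> t ht. rewrite -!divnMA -expnS. exact: H.
Qed.

Lemma gray_inj N x y : x < 2^N -> y < 2^N ->
  (forall t, t < N -> gbit x t = gbit y t) -> x = y.
Proof.
move=> hx hy H. apply: (@bits_inj N x y hx hy).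
have top : forall z, z < 2^N -> odd (z %/ 2^N) = false.
  by move=> z hz; rewrite divn_small.
have key : forall j, j <= N -> odd (x %/ 2^(N - j)) = odd (y %/ 2^(N-j)).
  elim=> [|j IH] hj; first by rewrite subn0 !top.
  have ht : N - j.+1 < N by lia.
  have := H _ ht. rewrite /gbit. have -> : (N - j.+1).+1 = N - j by lia.
  rewrite IH ?(ltnW hj) //.
  by move: (odd (x %/ 2 ^ (N - j.+1))) (odd (y %/ 2 ^ (N - j.+1))) (odd (y %/ 2 ^ (N - j))) => [] [] [].
move=> t ht. have := key (N - t) (leq_subr _ _). by rewrite subKn // ltnW.
Qed.

Lemma main m b L (hb : 0 < b) (ha : 2^b = 2 * m) (hL : L = 2^m) :
  exists S : 'I_(2^b) -> 'I_L -> bvec (m + b),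
    [/\ injective (fun p : 'I_(2^b) * 'I_L => S p.1 p.2),
        (forall v : bvec (m + b), exists i k, S i k = v),
        (forall (i : 'I_(2^b)) (k k' : 'I_L), val k' = (val k).+1 ->
           hamming (S i k) (S i k') = 1) &
        (forall (i j : 'I_(2^b)) (k k' : 'I_L) (c : 'I_(m + b)),
           i != j -> val k' = (val k).+1 ->
           S i k c != S i k' c -> S j k c != S j k' c ->
           hamming (S i k) (S j k) = 1)].
Proof.
have m0 : 0 < m by have := expn_gt0 2 b; rewrite ha; lia.
have pm : forall i : 'I_(2^b), i %/ 2 < m.
  by move=> i; rewrite ltn_divLR // mulnC -ha.
pose S := fun (i : 'I_(2^b)) (k : 'I_L) =>
  ([ffun t : 'I_(m+b) => if val t < m then gbit k ((t + i %/ 2) %% m)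
                        else odd (i %/ 2^(t - m))] : bvec (m + b)).
have flip : forall i (k k' : 'I_L) (t : 'I_(m+b)), val k' = (val k).+1 ->
   (S i k t != S i k' t) = (val t < m) && ((t + i %/ 2) %% m == logn 2 k').
  move=> i k k' t e. rewrite !ffunE. case: ifP => //= _.
    by rewrite e eq_sym gflip.
  by rewrite eqxx.
have one : forall (u v : bvec (m+b)) (c : 'I_(m+b)),
    (forall t, (u t != v t) = (t == c)) -> hamming u v = 1.
  move=> u v c H. rewrite /hamming (_ : [set t | u t != v t] = [set c]) ?cards1 //.
  by apply/setP => t; rewrite !inE H.
have lb : forall k' : 'I_L, 0 < val k' -> logn 2 k' < m.
  move=> k' k0. have h : 2 ^ logn 2 k' <= k'.
    by apply: dvdn_leq => //; rewrite pfactor_dvdn.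
  rewrite -(@ltn_exp2l 2) //. apply: leq_ltn_trans h _. by rewrite -hL.
have inj : injective (fun p : 'I_(2^b) * 'I_L => S p.1 p.2).
  move=> [i k] [j k'] /= E.
  have eij : i = j.
    apply: val_inj. apply: (@bits_inj b); rewrite ?ltn_ord //.
    move=> t ht. have hu : m + t < m + b by rewrite ltn_add2l.
    move/ffunP: (E) => /(_ (Ordinal hu)).
    by rewrite !ffunE /= ltnNge leq_addr /= addKn.
  subst j. congr (_, _). apply: val_inj.
  apply: (@gray_inj m); rewrite -?hL ?ltn_ord //.
  move=> s hs. set p := i %/ 2. have hp : p < m := pm i.
  pose t0 := (s + (m - p)) %% m.
  have ht0 : t0 < m + b := leq_trans (ltn_pmod _ m0) (leq_addr _ _).
  have e0 : (t0 + p) %% m = s.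
    by rewrite modnDml -addnA subnK ?(ltnW hp) // modnDr modn_small.
  move/ffunP: (E) => /(_ (Ordinal ht0)).
  by rewrite !ffunE /= ltn_pmod // e0.
exists S; split; first exact: inj.
- move=> v.
  have hc : #|{: bvec (m + b)}| <= #|{: 'I_(2^b) * 'I_L}|.
    by rewrite card_ffun card_bool card_prod !card_ord hL -expnD addnC.
  have := inj_card_onto inj hc v.
  by case/codomP => -[i k] ->; exists i, k.
- move=> i k k' e. have k0 : 0 < val k' by rewrite e.
  set l := logn 2 k'. have hl : l < m := lb k' k0.
  set p := i %/ 2. have hp : p < m := pm i.
  pose t0 := (l + (m - p)) %% m.
  have ht0 : t0 < m + b := leq_trans (ltn_pmod _ m0) (leq_addr _ _).
  have e0 : (t0 + p) %% m = l.
    by rewrite modnDml -addnA subnK ?(ltnW hp) // modnDr modn_small.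
  apply: (one _ _ (Ordinal ht0)) => t. rewrite flip //.
  case: (ltnP t m) => htm /=.
  + rewrite -/p -/l -val_eqE /= -[in LHS]e0 eqn_modDr !modn_small ?ltn_pmod //.
  + apply/esym/eqP => E. rewrite E /= in htm. by rewrite leqNgt ltn_pmod in htm.
- move=> i j k k' c ij e fi fj.
  have k0 : 0 < val k' by rewrite e.
  rewrite flip // in fi; rewrite flip // in fj.
  move/andP: fi => [hc /eqP fi]. move/andP: fj => [_ /eqP fj].
  have pq : i %/ 2 = j %/ 2.
    have : (c + i %/2 == c + j %/ 2 %[mod m]) by rewrite fi fj.
    by rewrite eqn_modDl !modn_small ?pm // => /eqP.
  have hc0 : m < m + b by rewrite -{1}(addn0 m) ltn_add2l.
  apply: (one _ _ (Ordinal hc0)) => t. rewrite !ffunE.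
  case: (ltnP t m) => htm.
  + rewrite pq eqxx. apply/esym/eqP => E. by rewrite E /= ltnn in htm.
  + case: (posnP (t - m)) => h0.
    * have -> : t == Ordinal hc0 by rewrite -val_eqE /=; apply/eqP; lia.
      rewrite h0 expn0 !divn1. apply/negP => /eqP E.
      apply: (negP ij); apply/eqP/ord_inj.
      by rewrite (divn_eq i 2) (divn_eq j 2) !modn2 pq E.
    * have -> : t - m = (t - m).-1.+1 by rewrite prednK.
      rewrite expnS !divnMA pq eqxx. apply/esym/eqP => E.
      by rewrite E /= subnn in h0.
Qed.

Theorem lemma1 (b : nat) (hb : 1 <= b) :
  let n := 2 ^ b %/ 2 + b in
  let a := 2 ^ b in
  exists S : 'I_a -> 'I_(2 ^ n %/ a) -> bvec n,
    (* (1) partition of {0,1}^n *)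
    [/\ injective (fun p : 'I_a * 'I_(2 ^ n %/ a) => S p.1 p.2),
        (forall v : bvec n, exists i k, S i k = v),
    (* (2) consecutive vectors at Hamming distance 1 *)
        (forall (i : 'I_a) (k k' : 'I_(2 ^ n %/ a)), val k' = (val k).+1 ->
           hamming (S i k) (S i k') = 1) &
    (* (3) same flipped coordinate at step k in sequences i <> j only if
           H(S_{i,k}, S_{j,k}) = 1 *)
        (forall (i j : 'I_a) (k k' : 'I_(2 ^ n %/ a)) (c : 'I_n),
           i != j -> val k' = (val k).+1 ->
           S i k c != S i k' c -> S j k c != S j k' c ->
           hamming (S i k) (S j k) = 1)].
Proof.
have ha : 2 ^ b = 2 * (2 ^ b %/ 2).
  by case: b hb => [|b'] // _; rewrite expnS mulKn.
move=> n a.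
apply: (@main (2 ^ b %/ 2) b (2 ^ n %/ a) hb ha).
by rewrite /n /a expnD mulnK ?expn_gt0.
Qed.
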